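(* Let $\Gamma$ be an $l$-hyperflower with $t$ twins on $N$ vertices, with eigenvalues $\lambda_1\le\cdots\le\lambda_N$ of its (signless) normalized Laplacian. Then the spectrum of $\Gamma$ is given by: $0$, with multiplicity $N-l$; $t$, with multiplicity $l-1$; and $\lambda_N=N-tl+t$.
   Context: A hypergraph $\Gamma=(\mathcal{V},\mathcal{H})$ has a finite vertex set $\mathcal{V}=\{v_1,\ldots,v_N\}$ and a set $\mathcal{H}$ of nonempty subsets of $\mathcal{V}$ (hyperedges); standing assumption: no isolated vertices. $\deg(v)$ is the number of hyperedges containing $v$, $D$ the diagonal degree matrix, $A$ the matrix with $A_{ii}=0$ and $A_{ij}=-\#\{h\in\mathcal{H}: v_i,v_j\in h\}$ for $i\ne j$, and the (signless) normalized Laplacian is $L=\mathrm{Id}-D^{-1}A$, with real eigenvalues $\lambda_1\le\cdots\le\lambda_N$. An $l$-hyperflower with $t$ twins is a hypergraph whose vertex set is $\mathcal{V}=U\sqcup\mathcal{W}$, where $U$ consists of $t\cdot l$ distinct peripheral vertices $v_{zj}$ ($z=1,\ldots,t$, $j=1,\ldots,l$), and there is a nonempty set $h_1\subseteq\mathcal{W}$ such that $\mathcal{H}=\{h_1\cup\{v_{1j},\ldots,v_{tj}\}: j=1,\ldots,l\}$ (by the no-isolated-vertex assumption, $\mathcal{W}=h_1$). *)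

(* Defs.v *)
From mathcomp Require Import all_boot all_order all_algebra.
Set Implicit Arguments. Unset Strict Implicit. Unset Printing Implicit Defensive.
Import Order.TTheory GRing.Theory Num.Theory.
Local Open Scope ring_scope.

Section Hyper.
Variable N : nat.
Implicit Types H : {set {set 'I_N}}.

Definition no_isolated H : Prop := forall x : 'I_N, exists2 h, h \in H & x \in h.

Definition hdeg H (i : 'I_N) : nat := #|[set h in H | i \in h]|.

Definition hcommon H (i j : 'I_N) : nat := #|[set h in H | (i \in h) && (j \in h)]|.

Variable R : realFieldType.

Definition hadj H : 'M[R]_N :=
  \matrix_(i, j) (if i == j then 0 else - (hcommon H i j)%:R).

Definition hdegmx H : 'M[R]_N := diag_mx (\row_i (hdeg H i)%:R).

Definition nlap H : 'M[R]_N := 1%:M - invmx (hdegmx H) *m hadj H.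

End Hyper.

(* H is an l-hyperflower with t twins: there are t*l distinct peripheral
   vertices v (z, j) and a nonempty set h1 of non-peripheral vertices with
   H = { h1 ∪ {v(1,j),...,v(t,j)} : j = 1..l }. *)
Definition is_hyperflower (N l t : nat) (H : {set {set 'I_N}}) : Prop :=
  exists (v : 'I_t * 'I_l -> 'I_N) (h1 : {set 'I_N}),
    [/\ injective v,
        h1 != set0,
        h1 :&: [set v p | p : 'I_t * 'I_l] = set0 &
        H = [set h1 :|: [set v (z, j) | z : 'I_t] | j : 'I_l]].

(* Main.v *)
Require Import Defs.
From mathcomp Require Import all_boot all_order all_algebra.
Import Order.TTheory GRing.Theory Num.Theory.
Local Open Scope ring_scope.

Lemma sylv (R : comNzRingType) (n m : nat) (y : R) (M : 'M[R]_(n, m)) (P : 'M[R]_(m, n)) :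
  \det (y%:M - M *m P) * y ^+ m = y ^+ n * \det (y%:M - P *m M).
Proof.
have E1 : block_mx (y%:M : 'M_n) M P (1%:M : 'M_m) =
          block_mx 1%:M M 0 1%:M *m block_mx (y%:M - M *m P) 0 P 1%:M.
  by rewrite mulmx_block !mul1mx !mul0mx !mulmx1 !add0r subrK.
have E2 : block_mx (y%:M : 'M_n) M P (1%:M : 'M_m) *m block_mx 1%:M (- M) 0 y%:M =
          block_mx y%:M 0 P (y%:M - P *m M).
  rewrite mulmx_block !mulmx1 !mulmx0 !addr0 mul1mx mul_scalar_mx mul_mx_scalar mulmxN scalerN addNr addrC.
  by [].
have := congr1 determinant E2.
rewrite det_mulmx det_lblock det_ublock E1 det_mulmx det_ublock det_lblock !det1 !det_scalar.
by rewrite !mul1r mulr1 => ->.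
Qed.
Arguments sylv {R n m}.

Theorem mainTheorem7 (R : realFieldType) (N l t : nat) (H : {set {set 'I_N}}) :
  (0 < t)%N ->
  no_isolated H ->
  is_hyperflower l t H ->
  char_poly (nlap R H) =
    'X ^+ (N - l) * ('X - (t%:R)%:P) ^+ (l.-1)
      * ('X - (N%:R - (t * l)%:R + t%:R : R)%:P).
Proof.
move=> tpos noiso [v [h1 [vinj h1n0 h1dis HE]]].
pose e := fun j : 'I_l => h1 :|: [set v (z, j) | z : 'I_t].
have HE' : H = [set e j | j : 'I_l] by rewrite HE.
pose imV : {set 'I_N} := [set v p | p : 'I_t * 'I_l].
have vnh1 : forall p, v p \notin h1.
  move=> p; apply/negP => Hp.
  have : v p \in h1 :&: imV by rewrite inE Hp; apply/imsetP; exists p.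
  by rewrite h1dis inE.
have ve : forall z j j', (v (z, j) \in e j') = (j == j').
  move=> z j j'; rewrite /e in_setU (negbTE (vnh1 _)) /=.
  apply/imsetP/eqP => [[z' _ /vinj [_ ->]] // | ->]; by exists z.
have h1e : forall i j, i \in h1 -> i \in e j by move=> i j hi; rewrite /e in_setU hi.
have einj : injective e.
  move=> j j' Ejj'; have z0 : 'I_t := Ordinal tpos.
  by apply/eqP; rewrite -(ve z0 j j') -Ejj' ve eqxx.
have cardH : forall P : pred {set 'I_N}, #|[set h in H | P h]| = (\sum_j P (e j))%N.
  move=> P; transitivity (\sum_(h in H) (P h : nat))%N.
    rewrite -sum1_card big_mkcond [RHS]big_mkcond /=.
    by apply eq_bigr => h _; rewrite inE; case: (h \in H); case: (P h).
  rewrite HE' big_imset //= => j j' _ _; apply einj.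
have cov : forall i, (i \notin h1) = (i \in imV).
  move=> i; apply/idP/idP.
  - move=> ni; have [h hH ih] := noiso i; move: hH; rewrite HE' => /imsetP [j _ hj].
    move: ih; rewrite hj /e in_setU (negbTE ni) /= => /imsetP [z _ ->].
    by apply/imsetP; exists (z, j).
  - by move=> /imsetP [p _ ->]; exact: vnh1.
pose k := #|h1|.
have Nk : N = (k + t * l)%N.
  have cV : #|imV| = (t * l)%N by rewrite card_imset // card_prod !card_ord.
  have cC : ~: h1 = imV by apply/setP => i; rewrite inE cov.
  by rewrite -{1}(card_ord N) -(cardsC h1) -cV cC.
have lpos : (0 < l)%N.
  have [i hi] : exists i, i \in h1 by apply/set0Pn.
  have [h hH _] := noiso i; move: hH; rewrite HE' => /imsetP [j _ _].
  by case: (l) j => // -[].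
have degE : forall i, (hdeg H i)%:R = \sum_j ((i \in e j) : nat)%:R :> R.
  by move=> i; rewrite /hdeg cardH natr_sum.
have comE : forall i i', (hcommon H i i')%:R =
    \sum_j (((i \in e j) : nat)%:R * ((i' \in e j) : nat)%:R) :> R.
  move=> i i'; rewrite /hcommon (cardH (fun h => (i \in h) && (i' \in h))) natr_sum.
  by apply eq_bigr => j _; case: (i \in e j); case: (i' \in e j); rewrite ?mul1r ?mul0r.
have comii : forall i, hcommon H i i = hdeg H i.
  by move=> i; rewrite /hcommon /hdeg; apply: eq_card => h; rewrite !inE andbb.
have dnz : forall i, (hdeg H i)%:R != 0 :> R.
  move=> i; rewrite pnatr_eq0 -lt0n; have [h hH ih] := noiso i.
  by apply/card_gt0P; exists h; rewrite inE hH ih.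
have dh1 : forall i, i \in h1 -> (hdeg H i)%:R = l%:R :> R.
  move=> i hi; rewrite degE (eq_bigr (fun _ => 1)) ?sumr_const ?card_ord //.
  by move=> j _; rewrite h1e.
have dv : forall z j, (hdeg H (v (z, j)))%:R = 1 :> R.
  move=> z j; rewrite degE (bigD1 j) //= ve eqxx big1 ?addr0 //.
  by move=> j' hj'; rewrite ve eq_sym (negbTE hj').
pose Dinv : 'M[R]_N := diag_mx (\row_i ((hdeg H i)%:R)^-1).
have invD : invmx (hdegmx R H) = Dinv.
  have DD : hdegmx R H *m Dinv = 1%:M.
    apply/matrixP => i j; rewrite /hdegmx mul_diag_mx !mxE.
    by case: eqP => [->|_]; rewrite ?mulr1n ?mulr0n ?mulfV ?mulr0.
  have [Du _] := mulmx1_unit DD.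
  by rewrite -[invmx _]mulmx1 -DD mulmxA mulVmx ?mul1mx.
pose B : 'M[R]_(N, l) := \matrix_(i, j) ((i \in e j) : nat)%:R.
have BB : forall i i', (B *m B^T) i i' = (hcommon H i i')%:R.
  by move=> i i'; rewrite comE !mxE; apply eq_bigr => j _; rewrite !mxE.
have nlapE : nlap R H = (Dinv *m B) *m B^T.
  rewrite /nlap invD -mulmxA !mul_diag_mx; apply/matrixP => i i'; rewrite !mxE; move: (BB i i'); rewrite mxE => ->.
  case: eqP => [<-|_] /=; first by rewrite comii mulr0 subr0 mulr1n mulVf.
  by rewrite mulr0n sub0r mulrN opprK.
have sumF : forall j j', \sum_i (((i \in e j) : nat)%:R * ((hdeg H i)%:R^-1 * ((i \in e j') : nat)%:R))
    = k%:R / l%:R + t%:R *+ (j == j') :> R.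
  move=> j j'; rewrite (bigID (mem h1)) /=; congr (_ + _).
    rewrite (eq_bigr (fun _ => (l%:R)^-1)); last by move=> i hi; rewrite !h1e // dh1 // mul1r mulr1.
    by rewrite sumr_const mulr_natl.
  rewrite (eq_bigl (mem imV)); last by move=> i; rewrite /= cov.
  rewrite big_imset /=; last by move=> p q _ _; apply: vinj.
  rewrite (eq_bigr (fun p => ((p.2 == j) : nat)%:R * ((p.2 == j') : nat)%:R)); last first.
    by move=> [z j0] _; rewrite !ve dv invr1 mul1r /= !(eq_sym j0).
  rewrite -(pair_big xpredT xpredT (fun (z : 'I_t) (j0 : 'I_l) => ((j0 == j) : nat)%:R * ((j0 == j') : nat)%:R)) /=.
  rewrite (eq_bigr (fun _ => ((j == j') : nat)%:R)); last first.
    move=> z _; rewrite (bigD1 j) //= eqxx mul1r big1 ?addr0 // => j0 /negbTE ->.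
    by rewrite mul0r.
  by rewrite sumr_const card_ord; case: (j == j'); rewrite ?mul0rn ?mulr0n ?mulr1n.
pose col : 'M[R]_(l, 1) := const_mx (k%:R / l%:R).
pose row : 'M[R]_(1, l) := const_mx 1.
have PM : B^T *m (Dinv *m B) = (t%:R)%:M + col *m row.
  rewrite mul_diag_mx; apply/matrixP => j j'; rewrite !mxE.
  under eq_bigr => i _ do rewrite !mxE.
  by rewrite sumF big_ord1 !mxE mulr1 addrC.
have lnz : l%:R != 0 :> R by rewrite pnatr_eq0 -lt0n.
have RC : row *m col = (k%:R : R)%:M.
  apply/matrixP => a b; rewrite !mxE.
  under eq_bigr => j _ do rewrite !mxE.
  by rewrite sumr_const card_ord !ord1 eqxx mulr1n mul1r -(mulr_natr (k%:R / l%:R)) divfK.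
pose y : {poly R} := 'X - (t%:R)%:P.
have ynz : y != 0 by rewrite /y polyXsubC_eq0.
have Xl : char_poly (nlap R H) * 'X^l = 'X^N * char_poly (B^T *m (Dinv *m B)).
  by rewrite /char_poly /char_poly_mx nlapE !map_mxM; apply: sylv.
have cpPM : char_poly (B^T *m (Dinv *m B)) * y = y ^+ l * (y - (k%:R)%:P).
  rewrite PM /char_poly /char_poly_mx map_mxD map_scalar_mx map_mxM opprD addrA -raddfB /=.
  have := sylv y (map_mx polyC col) (map_mx polyC row).
  by rewrite -[map_mx _ row *m _]map_mxM RC map_scalar_mx -raddfB /= det_scalar1 expr1.
have lN : (l <= N)%N by rewrite Nk; exact: leq_trans (leq_pmull l tpos) (leq_addl k _).
have NR : N%:R = k%:R + (t * l)%:R :> R by rewrite Nk natrD.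
have cst : 'X - (N%:R - (t * l)%:R + t%:R : R)%:P = y - (k%:R)%:P.
  by rewrite NR addrK polyCD opprD addrA /y addrAC.
rewrite cst.
have yl : y ^+ l = y ^+ l.-1 * y by rewrite -exprSr prednK.
have cp' : char_poly (B^T *m (Dinv *m B)) = y ^+ l.-1 * (y - (k%:R)%:P).
  by apply: (mulIf ynz); rewrite cpPM yl mulrAC.
have XN : 'X^N = 'X^(N - l) * 'X^l :> {poly R} by rewrite -exprD subnK.
have Xlnz : 'X^l != 0 :> {poly R} by rewrite expf_neq0 // polyX_eq0.
apply: (mulIf Xlnz); rewrite Xl XN cp' -!mulrA; congr (_ * _).
by rewrite mulrC mulrA.
Qed.
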